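(* Let $G=(K\cup I,E)$ be a split graph such that no vertex $i\in I$ satisfies $N(i)=K$, and let $(V,\mathcal{F})$ be its split graph vertex shelling antimatroid. Then the set of paths of $(V,\mathcal{F})$ equals $P=P_1\cup P_2\cup P_3$, where $P_1=\{\{i\}: i\in I\}$, $P_2=\{\{k\}\cup(N(k)\cap I): k\in K\}$, $P_3=\{\operatorname{fos}(i)\cup\{k\}\cup\big((N(k)\cap I)\setminus\{i\}\big): i\in I,\ k\in N(i)\}$.
   Context: A split graph $G=(K\cup I,E)$ is a finite simple graph whose vertex set $V=K\cup I$ comes with a fixed partition into a clique $K$ and an independent set $I$. We write $u\sim v$ for adjacency; for $F\subseteq V$, $N(F)$ is the set of vertices of $V\setminus F$ adjacent to some vertex of $F$, and $N(v)=N(\{v\})$. A vertex is simplicial if its neighbours induce a clique. The split graph vertex shelling antimatroid of $G$ is $(V,\mathcal{F})$ where $F\subseteq V$ is feasible iff there is an ordering $f_1,\dots,f_{|F|}$ of $F$ such that each $f_j$ is simplicial in $G$ minus $\{f_1,\dots,f_{j-1}\}$ (the empty set is feasible). For $i\in I$, $\operatorname{fos}(i)=\{k\in K: k\not\sim i\}\cup\{i'\in I: N(i')\not\subseteq N(i)\}$. A path of an antimatroid $(V,\mathcal{F})$ is a nonempty feasible set that is not the union of two feasible sets both different from it (equivalently, a feasible set containing exactly one element whose removal leaves a feasible set). *)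

(* Defs.v *)
(* A finite simple graph is a symmetric irreflexive rel on a finType. *)
From mathcomp Require Import all_boot.
Set Implicit Arguments. Unset Strict Implicit. Unset Printing Implicit Defensive.

Section SplitShelling.
Variables (V : finType) (e : rel V).

Definition nbr (v : V) : {set V} := [set u | e v u].

Definition nbrs (F : {set V}) : {set V} := [set u | (u \notin F) && [exists f in F, e f u]].

Definition simplicial_in (S : {set V}) (v : V) : bool :=
  (v \notin S) &&
  [forall u, forall w,
     [&& u \notin S, w \notin S, e v u, e v w & u != w] ==> e u w].

Fixpoint shelling (S : {set V}) (s : seq V) : bool :=
  if s is x :: s' then simplicial_in S x && shelling (x |: S) s' else true.

Definition feasible (F : {set V}) : Prop :=
  exists s : seq V, [set x in s] = F /\ shelling set0 s.

Definition is_path (F : {set V}) : Prop :=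
  F != set0 /\ feasible F /\
  ~ (exists A B : {set V}, feasible A /\ feasible B /\ A != F /\ B != F /\ A :|: B = F).

Definition fos (K I : {set V}) (i : V) : {set V} :=
  [set k in K | ~~ e k i] :|: [set i' in I | ~~ (nbr i' \subset nbr i)].

End SplitShelling.

(* Main.v *)
Require Import Defs.
From mathcomp Require Import all_boot.
Set Implicit Arguments. Unset Strict Implicit. Unset Printing Implicit Defensive.

Lemma shelling_cat (V : finType) (e : rel V) (S : {set V}) s1 s2 :
  shelling e S (s1 ++ s2) = shelling e S s1 && shelling e (S :|: [set x in s1]) s2.
Proof.
elim: s1 S => [|a s1 IH] S /=.
  by rewrite (_ : S :|: [set x in [::]] = S) //; apply/setP=> x; rewrite !inE orbF.
rewrite IH andbA; congr (_ && shelling e _ s2).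
by apply/setP=> x; rewrite !inE orbCA orbA.
Qed.

Lemma simpP (V : finType) (e : rel V) (S : {set V}) v : simplicial_in e S v ->
  forall u w, u \notin S -> w \notin S -> e v u -> e v w -> u != w -> e u w.
Proof.
move=> /andP[_ /forallP H] u w uS wS vu vw uw.
by have /implyP := (forallP (H u)) w; apply; rewrite uS wS vu vw uw.
Qed.

Lemma simpI (V : finType) (e : rel V) (S : {set V}) v : v \notin S ->
  (forall u w, u \notin S -> w \notin S -> e v u -> e v w -> u != w -> e u w) ->
  simplicial_in e S v.
Proof.
move=> vS H; rewrite /simplicial_in vS /=; apply/forallP=> u; apply/forallP=> w.
by apply/implyP=> /and5P[uS wS vu vw uw]; apply: H.
Qed.

Lemma simp_notin (V : finType) (e : rel V) (S : {set V}) v : simplicial_in e S v -> v \notin S.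
Proof. by case/andP. Qed.

Lemma simp_mono (V : finType) (e : rel V) (S T : {set V}) v : simplicial_in e S v ->
  S \subset T -> v \notin T -> simplicial_in e T v.
Proof.
move=> H ST vT; apply: simpI => // u w uT wT; apply: (simpP H).
  by apply: contra uT; apply: (subsetP ST).
by apply: contra wT; apply: (subsetP ST).
Qed.

Lemma shelling_any (V : finType) (e : rel V) s (S : {set V}) : uniq s ->
  (forall x, x \in s -> x \notin S) ->
  (forall x (T : {set V}), x \in s -> S \subset T -> x \notin T -> simplicial_in e T x) ->
  shelling e S s.
Proof.
elim: s S => [|a s IH] S //= /andP[as_ us] H1 H2.
rewrite H2 ?inE ?eqxx ?H1 ?inE ?eqxx //=; apply: IH => //.
- move=> x xs; rewrite !inE negb_or H1 ?inE ?xs ?orbT // andbT.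
  by apply: contra as_ => /eqP <-.
- move=> x T xs ST xT; apply: H2; rewrite ?inE ?xs ?orbT //.
  by apply: subset_trans ST; apply: subsetUr.
Qed.

Lemma shelling_enum (V : finType) (e : rel V) (X S : {set V}) :
  (forall x, x \in X -> x \notin S) ->
  (forall x (T : {set V}), x \in X -> S \subset T -> x \notin T -> simplicial_in e T x) ->
  shelling e S (enum X).
Proof.
move=> H1 H2; apply: shelling_any; first exact: enum_uniq.
  by move=> x; rewrite mem_enum; apply: H1.
by move=> x T; rewrite mem_enum; apply: H2.
Qed.

Lemma shelling_split (V : finType) (e : rel V) (S : {set V}) s x :
  shelling e S s -> x \in s -> exists p1 p2,
  [/\ s = p1 ++ x :: p2, shelling e S p1 & simplicial_in e (S :|: [set y in p1]) x].
Proof.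
move=> sh xs; case/splitPr: xs sh => p1 p2.
by rewrite shelling_cat /= => /andP[H1 /andP[H2 _]]; exists p1, p2.
Qed.

Lemma feasible_at (V : finType) (e : rel V) F x : feasible e F -> x \in F ->
  exists s1, [/\ shelling e set0 s1, [set y in s1] \subset F &
                 simplicial_in e [set y in s1] x].
Proof.
case=> s [<- sh]; rewrite inE => xs.
case/splitPr: xs sh => s1 s2; rewrite shelling_cat /= => /andP[H1 /andP[H2 _]].
exists s1; split => //; last by rewrite set0U in H2.
by apply/subsetP=> y; rewrite !inE mem_cat => ->.
Qed.

Definition minfeas (V : finType) (e : rel V) (x : V) (F : {set V}) :=
  [/\ feasible e F, x \in F &
      forall F', feasible e F' -> x \in F' -> F' \subset F -> F' = F].

Lemma path_minfeas (V : finType) (e : rel V) F :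
  is_path e F <-> exists x, minfeas e x F.
Proof.
split.
  case=> F0 [[s [sF sh]] NP].
  case/lastP: s sF sh => [|s x] sF sh.
    by move: F0; rewrite -sF; case/set0Pn => y; rewrite inE.
  move: sh; rewrite -cats1 shelling_cat /= => /andP[sh1 /andP[sx _]].
  exists x; split.
    by exists (rcons s x); split => //; rewrite -cats1 shelling_cat /= sh1 sx.
    by rewrite -sF inE mem_rcons inE eqxx.
  move=> F' fF' xF' sub; case: (eqVneq F' F) => // neq; exfalso; apply: NP.
  exists F', [set y in s]; split => //; split; first by exists s.
  split => //; split.
    apply/negP=> /eqP E; move: (simp_notin sx); rewrite set0U E -sF inE.
    by rewrite mem_rcons inE eqxx.
  apply/setP=> y; rewrite -sF !inE mem_rcons inE.
  apply/idP/idP.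
    case/orP=> [yF|->]; last by rewrite orbT.
    by move: (subsetP sub y yF); rewrite -sF inE mem_rcons inE.
  case/orP=> [/eqP->|->]; by rewrite ?xF' ?orbT.
case=> x [fF xF minF]; split; first by apply/set0Pn; exists x.
split => //; case=> A [B [fA [fB [AF [BF ABF]]]]].
have : x \in A :|: B by rewrite ABF.
rewrite inE => /orP[xA|xB].
  by move/eqP: AF; apply; apply: minF => //; rewrite -ABF subsetUl.
by move/eqP: BF; apply; apply: minF => //; rewrite -ABF subsetUr.
Qed.

Definition splitG (V : finType) (e : rel V) (K I : {set V}) :=
  [/\ symmetric e, irreflexive e, K :|: I = [set: V], K :&: I = set0 &
      {in K &, forall u v, u != v -> e u v} /\ {in I &, forall u v, ~~ e u v}].

Definition Q2 (V : finType) (e : rel V) (I : {set V}) k := k |: (nbr e k :&: I).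
Definition Q3 (V : finType) (e : rel V) (K I : {set V}) i k :=
  fos e K I i :|: [set k] :|: ((nbr e k :&: I) :\ i).

Section Facts.
Variables (V : finType) (e : rel V) (K I : {set V}).

Lemma KorI : splitG e K I -> forall x, (x \in K) || (x \in I).
Proof. by case=> _ _ C _ _ x; rewrite -in_setU C inE. Qed.

Lemma KnI : splitG e K I -> forall x, x \in K -> x \in I -> False.
Proof.
case=> _ _ _ D _ x xK xI.
have : x \in K :&: I by rewrite inE xK xI.
by rewrite D inE.
Qed.

Lemma nbrIK : splitG e K I -> forall i u, i \in I -> e i u -> u \in K.
Proof.
move=> G i u iI iu; have [_ _ _ _ [_ Ind]] := G.
case/orP: (KorI G u) => // uI.
by move: (Ind _ _ iI uI); rewrite iu.
Qed.

Lemma simp_I : splitG e K I -> forall (T : {set V}) i, i \in I -> i \notin T ->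
  simplicial_in e T i.
Proof.
move=> G T i iI iT; apply: simpI => // u w _ _ iu iw uw.
by have [_ _ _ _ [Cl _]] := G; apply: Cl => //; apply: (nbrIK G iI).
Qed.

End Facts.

Section Facts2.
Variables (V : finType) (e : rel V) (K I : {set V}).
Hypothesis G : splitG e K I.

Let esym : symmetric e. Proof. by case: G. Qed.
Let eirr : irreflexive e. Proof. by case: G. Qed.
Let Cl : {in K &, forall u v, u != v -> e u v}. Proof. by case: G => _ _ _ _ []. Qed.
Let Ind : {in I &, forall u v, ~~ e u v}. Proof. by case: G => _ _ _ _ []. Qed.

Lemma neqKI x y : x \in K -> y \in I -> x != y.
Proof. by move=> xK yI; apply/eqP=> E; subst; apply: (KnI G xK yI). Qed.

Lemma lemC s1 k i : shelling e set0 s1 -> simplicial_in e [set y in s1] k ->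
  k \in K -> i \in I -> e k i -> i \notin [set y in s1] ->
  Q3 e K I i k \subset k |: [set y in s1].
Proof.
move=> sh sk kK iI eki iS.
have KnotN : forall y, y \in K -> y != k -> y \notin [set z in s1] -> e y i.
  move=> y yK yk yS; apply: (simpP sk) => //.
  - by apply: Cl; rewrite // eq_sym.
  - exact: neqKI.
have kS := simp_notin sk.
apply/subsetP => y; rewrite /Q3 /fos /nbr !inE.
case: (eqVneq y k) => [->|yk] /=; first by rewrite ?eqxx ?orbT.
case: (boolP (y \in s1)) => // yS.
have yS' : y \notin [set z in s1] by rewrite inE.
rewrite orbF; case/orP => [/orP[/andP[yK nyi]|/andP[yI nsub]]|/and3P[yi eky yI]].
- by rewrite KnotN in nyi.
- case/subsetPn: (nsub) => k'; rewrite !inE => eyk' nik'.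
  have k'K : k' \in K by apply: (nbrIK G yI eyk').
  have k'k : k' != k by apply: contraNneq nik' => ->; rewrite esym.
  have k'S : k' \in s1.
    apply: contraNT nik' => k'S; rewrite esym; apply: KnotN => //; by rewrite inE.
  have [p1 [p2 [E _ sk']]] := shelling_split sh k'S.
  rewrite set0U in sk'.
  have sub : [set z in p1] \subset [set z in s1].
    by apply/subsetP=> z; rewrite E !inE mem_cat => ->.
  have eky : e k y.
    apply: (simpP sk').
    + by apply: contra kS; apply: (subsetP sub).
    + by apply: contra yS'; apply: (subsetP sub).
    + by apply: Cl.
    + by rewrite esym.
    + exact: neqKI.
  have yi : y != i.
    by apply: contraNneq nsub => ->; apply/subsetP.
  by have := Ind yI iI; rewrite (simpP sk yS' iS eky eki yi).
- by have := Ind yI iI; rewrite (simpP sk yS' iS eky eki yi).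
Qed.

Lemma feas1 i : i \in I -> feasible e [set i].
Proof.
move=> iI; exists [:: i]; split; first by apply/setP=> x; rewrite !inE.
by rewrite /= andbT; apply: (simp_I G) => //; rewrite inE.
Qed.

Lemma feas2 k : k \in K -> feasible e (Q2 e I k).
Proof.
move=> kK; exists (enum (nbr e k :&: I) ++ [:: k]); split.
  by apply/setP=> x; rewrite /Q2 !inE mem_cat mem_enum !inE orbC.
rewrite shelling_cat; apply/andP; split.
  apply: shelling_enum => [x|x T]; first by rewrite in_set0.
  by rewrite inE => /andP[_ xI] _; apply: (simp_I G).
rewrite /= andbT set_enum set0U; apply: simpI.
  by rewrite !inE negb_and; apply/orP; right; apply/negP => /(KnI G kK).
have inK : forall u, u \notin nbr e k :&: I -> e k u -> u \in K.
  move=> u uN eku; case/orP: (KorI G u) => // uI.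
  by move: uN; rewrite /nbr !inE eku uI.
by move=> u w uN wN eku ekw uw; apply: Cl => //; apply: inK.
Qed.

Lemma feas3 i k : i \in I -> e i k -> feasible e (Q3 e K I i k).
Proof.
move=> iI eik; have kK := nbrIK G iI eik.
set Q := Q3 e K I i k.
have QE : Q = Q3 e K I i k by [].
clearbody Q.
have kQ : k \in Q by rewrite QE /Q3 !inE eqxx orbT.
have QK : forall x, x \in Q -> x \in K -> x != k -> ~~ e x i.
  move=> x; rewrite QE /Q3 /fos !inE => + xK xk; rewrite (negbTE xk) /=.
  rewrite orbF; case/orP => [/orP[/andP[_ ->] // | /andP[xI _]] | /and3P[_ _ xI]];
    by case: (KnI G xK xI).
exists (enum (Q :&: I) ++ enum (Q :&: K :\ k) ++ [:: k]); split.
  apply/setP=> x; rewrite !inE !mem_cat !mem_enum !inE.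
  case: (eqVneq x k) => [->|xk] /=; first by rewrite kQ !orbT.
  rewrite orbF; case: (boolP (x \in Q)) => //= _.
  by rewrite orbC (KorI G x).
rewrite !shelling_cat !set_enum set0U; apply/and3P; split.
- apply: shelling_enum => [x|x T]; first by rewrite in_set0.
  by rewrite inE => /andP[_ xI] _; apply: (simp_I G).
- apply: shelling_enum => [x|x T].
    rewrite !inE => /and3P[_ _ xK]; rewrite negb_and; apply/orP; right.
    by apply/negP => /(KnI G xK).
  rewrite !inE => /and3P[xk xQ xK] QT xT.
  have nxi := QK x xQ xK xk.
  have inK : forall u, u \notin T -> e x u -> u \in K.
    move=> u uT exu; case/orP: (KorI G u) => // uI; apply: contraNT uT => _.
    apply: (subsetP QT); rewrite inE uI andbT QE /Q3 /fos !inE uI.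
    apply/orP; left; apply/orP; left; apply/orP; right; apply/subsetPn; exists x.
      by rewrite /nbr inE esym.
    by rewrite /nbr inE esym.
  apply: simpI => // u w uT wT exu exw uw; apply: Cl => //; exact: inK.
- rewrite /= andbT; apply: simpI.
    by rewrite !inE eqxx /= orbF kQ /=; apply/negP => /(KnI G kK).
  have cl : forall z, z \notin (Q :&: I) :|: (Q :&: K :\ k) -> e k z ->
      z = i \/ (z \in K /\ e z i).
    move=> z zT ekz; case/orP: (KorI G z) => [zK|zI].
      right; split => //; apply: contraNT zT => nzi.
      have zk : z != k by apply: contraTneq ekz => ->; rewrite eirr.
      rewrite !inE zK zk /= andbT orbC QE /Q3 /fos !inE zK nzi //.
    left; apply/eqP; apply: contraNT zT => zi.
    by rewrite !inE zI QE /Q3 /fos /nbr !inE zi ekz zI ?orbT.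
  move=> u w uT wT eku ekw uw.
  case: (cl u uT eku) => [ui|[uK eui]]; case: (cl w wT ekw) => [wi|[wK ewi]].
  + by rewrite ui wi eqxx in uw.
  + by rewrite ui esym.
  + by rewrite wi.
  + by apply: Cl.
Qed.

End Facts2.

Section Main.
Variables (V : finType) (e : rel V) (K I : {set V}).
Hypothesis G : splitG e K I.
Hypothesis noFull : forall i, i \in I -> nbr e i != K.

Let esym : symmetric e. Proof. by case: G. Qed.
Let eirr : irreflexive e. Proof. by case: G. Qed.

Lemma minfeas_P x F : minfeas e x F ->
    [\/ exists2 i, i \in I & F = [set i],
        exists2 k, k \in K & F = k |: (nbr e k :&: I)
      | exists i k, [/\ i \in I, k \in nbr e i &
          F = fos e K I i :|: [set k] :|: ((nbr e k :&: I) :\ i)]].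
Proof.
case=> fF xF minF; case/orP: (KorI G x) => [xK|xI].
  have [s1 [sh sub sx]] := feasible_at fF xF.
  case: (boolP (nbr e x :&: I \subset [set y in s1])) => [Nsub|].
    apply: Or32; exists x => //; symmetry; apply: minF.
    - exact: (feas2 G).
    - by rewrite setU11.
    apply/subsetP => y; rewrite in_setU1 => /orP[/eqP->//|yN].
    by apply: (subsetP sub); apply: (subsetP Nsub).
  case/subsetPn => i; rewrite /nbr !inE => /andP[exi iI] iS.
  apply: Or33; exists i, x; split => //; first by rewrite /nbr inE esym.
  symmetry; apply: minF.
  - by apply: (feas3 G) => //; rewrite esym.
  - by rewrite /Q3 !inE eqxx orbT.
  have iS' : i \notin [set y in s1] by rewrite inE.
  apply: subset_trans (lemC G sh sx xK iI exi iS') _.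
  by apply/subsetP => y; rewrite in_setU1 => /orP[/eqP->//|]; apply: (subsetP sub).
apply: Or31; exists x => //; symmetry; apply: minF.
- exact: (feas1 G).
- by rewrite inE.
- by rewrite sub1set.
Qed.

Lemma P_minfeas F :
    [\/ exists2 i, i \in I & F = [set i],
        exists2 k, k \in K & F = k |: (nbr e k :&: I)
      | exists i k, [/\ i \in I, k \in nbr e i &
          F = fos e K I i :|: [set k] :|: ((nbr e k :&: I) :\ i)]] ->
  exists x, minfeas e x F.
Proof.
case.
- case=> i iI ->; exists i; split; [exact: (feas1 G) | by rewrite inE |].
  move=> F' _ iF' sub; apply/eqP; rewrite eqEsubset sub /=.
  by rewrite sub1set.
- case=> k kK ->; exists k; split; [exact: (feas2 G) | by rewrite setU11 |].
  move=> F' fF' kF' sub; apply/eqP; rewrite eqEsubset sub /=.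
  have [s1 [sh sub1 sk]] := feasible_at fF' kF'.
  apply/subsetP => y; rewrite in_setU1 => /orP[/eqP->//|yN].
  case: (boolP (y \in [set z in s1])) => [|yS]; first by apply: (subsetP sub1).
  exfalso; move: (yN); rewrite /nbr !inE => /andP[eky yI].
  have Q3sub : Q3 e K I y k \subset F'.
    apply: subset_trans (lemC G sh sk kK yI eky yS) _.
    by apply/subsetP => z; rewrite in_setU1 => /orP[/eqP->//|]; apply: (subsetP sub1).
  move/eqP: (noFull yI); apply; apply/setP => z; rewrite /nbr inE.
  apply/idP/idP; first by apply: (nbrIK G yI).
  move=> zK; apply: contraTT isT => nyz.
  have : z \in Q3 e K I y k by rewrite /Q3 /fos !inE zK esym nyz.
  move=> /(subsetP Q3sub) /(subsetP sub); rewrite in_setU1 => /orP[/eqP E|].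
    by move: nyz; rewrite E esym eky.
  by rewrite /nbr !inE => /andP[_ zI]; case: (KnI G zK zI).
- case=> i [k [iI kN ->]].
  have eik : e i k by move: kN; rewrite /nbr inE.
  have kK := nbrIK G iI eik.
  exists k; split; [exact: (feas3 G iI eik) | by rewrite !inE eqxx orbT |].
  move=> F' fF' kF' sub; apply/eqP; rewrite eqEsubset sub /=.
  have [s1 [sh sub1 sk]] := feasible_at fF' kF'.
  have iQ : i \notin Q3 e K I i k.
    rewrite /Q3 /fos !inE eqxx subxx /= andbF orbF.
    have -> : (i \in K) = false by apply/negP => /(KnI G)/(_ iI).
    by rewrite /=; apply/negP => /eqP E; move: iI; rewrite E => /(KnI G kK).
  have iS : i \notin [set y in s1].
    by apply: contra iQ => /(subsetP sub1) /(subsetP sub).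
  have eki : e k i by rewrite esym.
  apply: subset_trans (lemC G sh sk kK iI eki iS) _.
  by apply/subsetP => z; rewrite in_setU1 => /orP[/eqP->//|]; apply: (subsetP sub1).
Qed.

End Main.

Theorem mainTheorem10 (V : finType) (e : rel V) (K I : {set V})
  (e_sym : symmetric e) (e_irr : irreflexive e)
  (KI_cover : K :|: I = [set: V]) (KI_disj : K :&: I = set0)
  (K_clique : {in K &, forall u v, u != v -> e u v})
  (I_indep : {in I &, forall u v, ~~ e u v})
  (noFull : forall i, i \in I -> nbr e i != K) :
  forall F : {set V},
    is_path e F <->
    [\/ exists2 i, i \in I & F = [set i],
        exists2 k, k \in K & F = k |: (nbr e k :&: I)
      | exists i k, [/\ i \in I, k \in nbr e i &
          F = fos e K I i :|: [set k] :|: ((nbr e k :&: I) :\ i)]].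
Proof.
have G : splitG e K I by split.
move=> F; split.
  by case/path_minfeas => x H; apply: (minfeas_P G H).
by move=> H; apply/path_minfeas; exact: (P_minfeas G noFull).
Qed.
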